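(* For the Byzantine-tolerant algorithm described in the context, under the fair distributed daemon and any Byzantine behaviour: if $\gamma$ is a degree-stabilized configuration such that $I_\gamma$ is not a maximal independent set of the subgraph induced by $V_2\cup I_\gamma$, then the configuration $\gamma'$ reached after two rounds starting from $\gamma$ satisfies $I_\gamma\subsetneq I_{\gamma'}$ with probability at least $\frac{1}{(\Delta+1)e}$.
   Context: Network and model. $G=(V,E)$ is a finite simple undirected graph; $N(u)$ is the open neighbourhood of $u$, $N[u]=N(u)\cup\{u\}$, $\deg(u)=|N(u)|$, $\Delta=\max_{u\in V}\deg(u)$. Nodes are anonymous. Each node holds local variables; a configuration is an assignment of values to all local variables. A rule ''guard $\to$ command'' is enabled on $u$ in $\gamma$ if its guard (a predicate on the variables of $u$ and its neighbours) holds; its command rewrites only $u$'s variables, possibly randomly. $u$ is activable if some rule is enabled on it. A transition $\gamma\xrightarrow{t}\gamma'$ is given by a nonempty set $t$ of moves $(u,r)$ with $r$ enabled on $u$ in $\gamma$, at most one per node, all executed simultaneously from the values in $\gamma$, with independent random choices. An execution is a sequence of consecutive transitions chosen by a daemon. The fair distributed daemon may choose any such $t$, subject to fairness: no node may remain activable forever without being activated. Probabilities are in the worst case over the daemon's and Byzantine nodes' strategies. Rounds. The rounds of an execution are consecutive segments of transitions: the first round starts at the beginning of the execution, each subsequent round starts immediately after the previous one ends, and the current round ends as soon as every node $u\in V$ has either been activated in at least one transition of the round or been non-activable in at least one configuration of the round. Byzantine nodes. A subset $B\subseteq V$ consists of Byzantine nodes: always activable and, when activated, they may set their variables to arbitrary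 values. $d(u,B)$ is the graph distance from $u$ to $B$ and $V_i=\{u\in V: d(u,B)>i\}$. Algorithm. Each node $u$ has variables $s_u\in\{\bot,\top\}$ and $x_u\in\mathbb{N}$; $Rand(q)$ returns $1$ with probability $q$, else $0$, independently. Non-Byzantine nodes follow the rules: (Refresh) $x_u\neq \deg(u)\ \to\ x_u:=\deg(u)$. (Candidacy?) $x_u=\deg(u)\wedge s_u=\bot\wedge \forall v\in N(u),\ s_v=\bot\ \to$ if $Rand\big(\frac{1}{1+\max\{x_v: v\in N[u]\}}\big)=1$ then $s_u:=\top$. (Withdrawal) $x_u=\deg(u)\wedge s_u=\top\wedge \exists v\in N(u),\ s_v=\top\ \to\ s_u:=\bot$. For a configuration $\gamma$, $I_\gamma=\{u\in V_1: s_u^\gamma=\top \text{ and } \forall v\in N(u),\ s_v^\gamma=\bot\}$. $\gamma$ is degree-stabilized if $x_u^\gamma=\deg(u)$ for every non-Byzantine node $u$. *)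

(* Defs.v *)
From HB Require Import structures.
From mathcomp Require Import all_boot all_order all_algebra.
From mathcomp Require Import reals sequences exp.
Set Implicit Arguments. Unset Strict Implicit. Unset Printing Implicit Defensive.
Import Order.TTheory GRing.Theory Num.Theory.
Local Open Scope ring_scope.

(* A configuration: for each node u, the pair (s_u, x_u), where
   s_u = true encodes "top" and s_u = false encodes "bot". *)
Definition config (V : finType) := V -> bool * nat.

Section Model.
Variables (V : finType) (adj : rel V) (B : {set V}).

Definition nbrs (u : V) : {set V} := [set v | adj u v].
Definition cnbrs (u : V) : {set V} := u |: nbrs u.
Definition deg (u : V) : nat := #|nbrs u|.
Definition maxdeg : nat := \max_(u : V) deg u.

(* near k u  <->  d(u,B) <= k ;  V_k = nodes with d(u,B) > k *)
Fixpoint near (k : nat) (u : V) : bool :=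
  if k is k'.+1 then near k' u || [exists v, adj u v && near k' v]
  else u \in B.
Definition Vgt (k : nat) : {set V} := [set u | ~~ near k u].

Definition sv (g : config V) u := (g u).1.
Definition xv (g : config V) u := (g u).2.

Definition refreshG (g : config V) u := xv g u != deg u.
Definition candG (g : config V) u :=
  [&& xv g u == deg u, ~~ sv g u & [forall v, adj u v ==> ~~ sv g v]].
Definition withdrawG (g : config V) u :=
  [&& xv g u == deg u, sv g u & [exists v, adj u v && sv g v]].

Definition activable (g : config V) u :=
  (u \in B) || [|| refreshG g u, candG g u | withdrawG g u].
Definition activ (g : config V) : {set V} := [set u | activable g u].
Definition nonactiv (g : config V) : {set V} := [set u | ~~ activable g u].

Definition degree_stabilized (g : config V) :=
  forall u, u \notin B -> xv g u = deg u.

Definition Iset (g : config V) : {set V} :=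
  [set u in Vgt 1 | sv g u && [forall v, adj u v ==> ~~ sv g v]].

Definition indep_in (W S : {set V}) :=
  (S \subset W) /\ (forall u v, u \in S -> v \in S -> ~~ adj u v).
Definition maximal_indep_in (W S : {set V}) :=
  indep_in W S /\ (forall S' : {set V}, S \proper S' -> ~ indep_in W S').

(* A (deterministic, history-dependent) adversary: the daemon chooses the set
   of activated nodes and the Byzantine nodes choose their new values, as
   functions of the past configurations and of the current configuration. *)
Record strategy := Strategy {
  sched : seq (config V) -> config V -> {set V};
  byzv : seq (config V) -> config V -> V -> bool * nat }.

Definition admissible (st : strategy) :=
  forall h g, sched st h g \subset activ g /\
              (activ g != set0 -> sched st h g != set0).

(* Result of a transition activating t, with Byzantine values bv, where S is
   the set of Candidacy moves whose Rand returned 1. *)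
Definition step (g : config V) (t : {set V}) (bv : V -> bool * nat)
    (S : {set V}) : config V :=
  fun u =>
    if u \notin t then g u
    else if u \in B then bv u
    else if refreshG g u then (sv g u, deg u)
    else if candG g u then (u \in S, xv g u)
    else if withdrawG g u then (false, xv g u)
    else g u.

Definition candset (g : config V) (t : {set V}) : {set V} :=
  [set u in t | (u \notin B) && candG g u].

Section Prob.
Variable R : realType.

(* parameter of Rand in Candidacy: 1 / (1 + max {x_v : v in N[u]}) *)
Definition qprob (g : config V) (u : V) : R :=
  ((1 + \max_(v in cnbrs u) xv g v)%N%:R)^-1.

Definition weight (g : config V) (C S : {set V}) : R :=
  \prod_(u in C) (if u \in S then qprob g u else 1 - qprob g u).

Variable st : strategy.
Variable goal : config V -> bool.

(* reach n h g r done : probability that, from the current configuration g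
   (past configurations h), with r rounds already completed and "done" the set
   of nodes that, in the current round, were activated or non-activable in
   some configuration, the execution completes its 2nd round within at most
   n further transitions and the configuration at the end of the 2nd round
   satisfies goal.  A terminal configuration (no activable node) ends all
   rounds. *)
Fixpoint reach (n : nat) (h : seq (config V)) (g : config V) (r : nat)
    (done : {set V}) : R :=
  if (2 <= r)%N then (goal g)%:R
  else if activ g == set0 then (goal g)%:R
  else if n is n'.+1 then
    let t := sched st h g in
    let C := candset g t in
    \sum_(S : {set V} | S \subset C)
      weight g C S *
      (let g' := step g t (byzv st h g) S in
       let done' := done :|: t :|: nonactiv g' in
       if done' == setT then reach n' (rcons h g) g' r.+1 (nonactiv g')
       else reach n' (rcons h g) g' r done')
  else 0.

Definition reach0 (n : nat) (g0 : config V) : R :=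
  reach n [::] g0 0 (nonactiv g0).

End Prob.
End Model.

(* Main.v *)
Require Import Defs.
From HB Require Import structures.
From mathcomp Require Import all_boot all_order all_algebra.
From mathcomp Require Import reals sequences exp.
From Stdlib Require Import Classical.
From mathcomp Require Import ring lra.
Set Implicit Arguments. Unset Strict Implicit. Unset Printing Implicit Defensive.
Import Order.TTheory GRing.Theory Num.Theory.
Local Open Scope ring_scope.

Lemma sumsub (R : realType) (V : finType) (C : {set V}) (a b : V -> R) :
  \sum_(S : {set V} | S \subset C) \prod_(u in C) (if u \in S then a u else b u)
  = \prod_(u in C) (a u + b u).
Proof.
have E := @bigA_distr R 0 1 *%R +%R V (fun i => if i \in C then a i else 0)
                   (fun i => if i \in C then b i else 1).
rewrite [X in _ = X](bigID (fun S : {set V} => S \subset C)) /= in E.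
rewrite [X in _ + X]big1 ?addr0 in E; last first.
  move=> S HS; case/subsetPn: HS => x xS xC; rewrite (bigD1 x) //= xS (negbTE xC) mul0r //.
rewrite [RHS]big_mkcond /=.
have -> : \prod_(i : V) (if i \in C then a i + b i else 1)
   = \prod_i ((if i \in C then a i else 0) + (if i \in C then b i else 1)).
  by apply: eq_bigr => i _; case: (i \in C); rewrite ?add0r.
rewrite E; apply: eq_bigr => S SC; rewrite big_mkcond /=.
apply: eq_bigr => i _; case iC: (i \in C); case iS: (i \in S) => //.
by move/subsetP: SC => /(_ i); rewrite iS iC => /(_ isT).
Qed.
Section Main.
Variables (R : realType) (V : finType) (adj : rel V) (B : {set V}) (st : strategy V).
Hypotheses (sym : symmetric adj) (irr : irreflexive adj) (adm : admissible adj B st).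

Notation stab g := (degree_stabilized adj B g).
Notation reachR := (reach adj B R st).
Notation stepA := (step adj B).

Lemma reachE goal n h g r done : reachR goal n.+1 h g r done =
  if (2 <= r)%N then (goal g)%:R
  else if activ adj B g == set0 then (goal g)%:R
  else
    let t := sched st h g in
    let C := candset adj B g t in
    \sum_(S : {set V} | S \subset C)
      weight adj R g C S *
      (let g' := stepA g t (byzv st h g) S in
       let done' := done :|: t :|: nonactiv adj B g' in
       if done' == setT then reachR goal n (rcons h g) g' r.+1 (nonactiv adj B g')
       else reachR goal n (rcons h g) g' r done').
Proof. by []. Qed.

Lemma reach0E goal h g r done : reachR goal 0 h g r done =
  if (2 <= r)%N then (goal g)%:R
  else if activ adj B g == set0 then (goal g)%:R else 0.
Proof. by []. Qed.

Lemma V1P u : u \in Vgt adj B 1 -> u \notin B /\ forall w, adj u w -> w \notin B.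
Proof.
rewrite inE /= negb_or => /andP[-> /existsPn H]; split=> // w aw.
by have := H w; rewrite aw.
Qed.

Lemma V2V1 u w : u \in Vgt adj B 2 -> adj u w -> w \in Vgt adj B 1.
Proof.
rewrite !inE /= negb_or => /andP[_ /existsPn H] aw; have := H w.
by rewrite aw.
Qed.

Lemma V2V1' u : u \in Vgt adj B 2 -> u \in Vgt adj B 1.
Proof. by rewrite !inE /= negb_or => /andP[]. Qed.

Lemma qprob_gt0 (g : config V) u : 0 < qprob adj R g u.
Proof. rewrite /qprob; set m := (\max_(v in _) _)%N; by rewrite invr_gt0 ltr0n. Qed.

Lemma qprob_le1 (g : config V) u : qprob adj R g u <= 1.
Proof.
rewrite /qprob; set m := (\max_(v in _) _)%N.
by rewrite invf_le1 ?ltr0n // ler1n.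
Qed.

Lemma weight_ge0 (g : config V) (C S : {set V}) : 0 <= weight adj R g C S.
Proof.
rewrite /weight; apply: prodr_ge0 => u _; case: ifP => _.
  exact: ltW (qprob_gt0 g u).
by rewrite subr_ge0 qprob_le1.
Qed.

Lemma weight_sum1 (g : config V) (C : {set V}) : \sum_(S : {set V} | S \subset C) weight adj R g C S = 1.
Proof.
rewrite /weight sumsub; apply: big1 => u _; by rewrite addrC subrK.
Qed.

Lemma sum_w_le (g : config V) (C : {set V}) (X : {set V} -> R) (c : R) :
  (forall S : {set V}, S \subset C -> X S <= c) ->
  \sum_(S : {set V} | S \subset C) weight adj R g C S * X S <= c.
Proof.
move=> HX; apply: (@le_trans _ _ (\sum_(S : {set V} | S \subset C) weight adj R g C S * c)).
  apply: ler_sum => S SC; apply: ler_wpM2l; [exact: weight_ge0| exact: HX].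
by rewrite -big_distrl /= weight_sum1 mul1r.
Qed.

Lemma step_stab (g : config V) (t : {set V}) bv (S : {set V}) : stab g -> stab (stepA g t bv S).
Proof.
move=> hs u uB; rewrite /xv /step; case: ifP => ut; first exact: hs.
rewrite (negbTE uB) /refreshG [xv g u]hs // eqxx /=.
case: ifP => _ //=; case: ifP => _ //=; exact: hs.
Qed.

Lemma step_same (g : config V) (t : {set V}) bv (S : {set V}) u : stab g -> u \notin B ->
  ~~ candG adj g u -> ~~ withdrawG adj g u -> stepA g t bv S u = g u.
Proof.
move=> hs uB hc hw; rewrite /step; case: ifP => // _.
by rewrite (negbTE uB) /refreshG [xv g u]hs // eqxx (negbTE hc) (negbTE hw).
Qed.

Lemma step_Iset (g : config V) (t : {set V}) bv (S : {set V}) : stab g -> Iset adj B g \subset Iset adj B (stepA g t bv S).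
Proof.
move=> hs; apply/subsetP => u; rewrite !inE => /and3P[u1 su /forallP nb].
have [uB nB] : u \notin B /\ forall w, adj u w -> w \notin B by apply: V1P; rewrite inE.
have eu : stepA g t bv S u = g u.
  apply: step_same => //.
    by rewrite /candG su andbF.
  rewrite /withdrawG negb_and; apply/orP; right; rewrite negb_and; apply/orP; right.
  apply/existsPn => w; rewrite negb_and; have := nb w; by case: (adj u w).
rewrite u1 /= {1}/sv eu; move: (su); rewrite /sv => -> /=; apply/forallP => w; apply/implyP => aw.
have ew : stepA g t bv S w = g w.
  apply: step_same => //; first exact: nB.
    rewrite /candG negb_and; apply/orP; right; rewrite negb_and; apply/orP; right.
    apply/forallPn; exists u; rewrite sym aw /= negbK; exact: su.
  have := nb w; rewrite aw /= => sw.
  by rewrite /withdrawG (negbTE sw) andbF.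
rewrite ew; have := nb w; by rewrite aw.
Qed.

Lemma reach_lin (g1 g2 g3 : config V -> bool) :
  (forall g, (g3 g)%:R = (g1 g)%:R + (g2 g)%:R :> R) ->
  forall n h g r done, reachR g3 n h g r done = reachR g1 n h g r done + reachR g2 n h g r done.
Proof.
move=> H; elim=> [|n IH] h g r done.
  by rewrite !reach0E; case: ifP => // _; case: ifP => // _; rewrite addr0.
rewrite !reachE; case: ifP => // _; case: ifP => // _ /=.
rewrite -big_split /=; apply: eq_bigr => S _; rewrite -mulrDr; congr (_ * _).
by case: ifP => _; rewrite IH.
Qed.

Lemma reach_le1 goal : forall n h g r done, 0 <= reachR goal n h g r done <= 1.
Proof.
elim=> [|n IH] h g r done.
  by rewrite reach0E; case: ifP => _; [|case: ifP => _]; case: (goal g); rewrite ?lexx ?ler01.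
rewrite reachE; case: ifP => _; [by case: (goal g); rewrite ?lexx ?ler01|].
case: ifP => _; [by case: (goal g); rewrite ?lexx ?ler01|] => /=.
apply/andP; split.
  apply: sumr_ge0 => S _; apply: mulr_ge0; first exact: weight_ge0.
  by cbv zeta; case: ifP => _; apply: (proj1 (andP (IH _ _ _ _))).
apply: sum_w_le => S _; by cbv zeta; case: ifP => _; apply: (proj2 (andP (IH _ _ _ _))).
Qed.

End Main.

Section Claims.
Variables (R : realType) (V : finType) (adj : rel V) (B : {set V}) (st : strategy V).
Hypotheses (sym : symmetric adj) (irr : irreflexive adj) (adm : admissible adj B st).
Variables (I0 : {set V}) (v : V).
Hypotheses (hv2 : v \in Vgt adj B 2) (hvI : forall u, u \in cnbrs adj v -> u \notin I0).

Notation stab g := (degree_stabilized adj B g).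
Notation reachR := (reach adj B R st).
Notation stepA := (step adj B).

Definition good (g : config V) := I0 \proper Iset adj B g.
Definition bad (g : config V) := ~~ good g.
Definition pp : R := ((maxdeg adj)%:R + 1)^-1 * (expR 1)^-1.

Lemma pp_ge0 : 0 <= pp.
Proof. by rewrite /pp mulr_ge0 // invr_ge0 ?expR_ge0 // addr_ge0. Qed.

Lemma e_ge1 : 1 <= expR 1 :> R.
Proof. by apply: ltW; rewrite expR_gt1 ltr01. Qed.

Lemma pp_le1 : pp <= 1.
Proof.
rewrite /pp mulr_ile1 ?invr_ge0 ?expR_ge0 ?addr_ge0 //.
  by rewrite invf_le1 ?ltr_wpDl // lerDr.
by rewrite invf_le1 ?e_ge1 // (lt_le_trans ltr01 e_ge1).
Qed.

Lemma good_step g t bv S : stab g -> good g -> good (stepA g t bv S).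
Proof. by move=> hs hg; apply: (proper_sub_trans hg); apply: step_Iset. Qed.

Lemma claimC : forall n h g r done, stab g -> good g -> reachR bad n h g r done = 0.
Proof.
elim=> [|n IH] h g r done hs hg.
  by rewrite reach0E /bad hg; case: ifP => //; case: ifP.
rewrite reachE /bad hg; case: ifP => // _; case: ifP => // _.
cbv zeta; apply: big1 => S _.
case: ifP => _; rewrite IH ?mulr0 //; by [apply: step_stab| apply: good_step].
Qed.

Lemma nbV1 u : u \in cnbrs adj v -> u \in Vgt adj B 1.
Proof.
case/setU1P => [->|]; first exact: V2V1'.
by rewrite inE; apply: V2V1.
Qed.

Lemma NA g u : stab g -> I0 \subset Iset adj B g -> ~~ good g ->
  u \in cnbrs adj v -> ~~ activable adj B g u -> ~~ sv g u.
Proof.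
move=> hs hI hg un; apply: contra => su.
have u1 := nbV1 un; have [uB nB] := V1P u1.
rewrite /activable; apply/orP; right.
case E: [exists w, adj u w && sv g w].
  by rewrite /withdrawG hs // eqxx su E !orbT.
have uI : u \in Iset adj B g.
  rewrite inE u1 su /=; apply/forallP => w; apply/implyP => aw; apply/negP => sw.
  have : [exists w, adj u w && sv g w] by apply/existsP; exists w; rewrite aw.
  by rewrite E.
move: hg; rewrite /good properE hI /= negbK => /subsetP /(_ u uI) uI0.
by have := hvI un; rewrite uI0.
Qed.

Lemma v_cand g : stab g -> (forall u, u \in cnbrs adj v -> ~~ sv g u) -> candG adj g v.
Proof.
move=> hs hn; have [vB _] := V1P (V2V1' hv2).
rewrite /candG hs // eqxx hn ?setU11 //=; apply/forallP => w; apply/implyP => aw.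
by apply: hn; apply/setU1P; right; rewrite inE.
Qed.

Lemma not_term g : stab g -> I0 \subset Iset adj B g -> ~~ good g -> activ adj B g != set0.
Proof.
move=> hs hI hg; apply/negP => /eqP E.
have na u : ~~ activable adj B g u.
  have : u \notin activ adj B g by rewrite E inE.
  by rewrite inE.
have := na v; rewrite /activable v_cand ?orbT //.
by move=> u hu; apply: NA.
Qed.


Lemma rle1 goal n h g r done : reachR goal n h g r done <= 1.
Proof. by case/andP: (reach_le1 R adj B st goal n h g r done). Qed.

Lemma success_good (g : config V) (t : {set V}) bv (S : {set V}) u : stab g -> I0 \subset Iset adj B g ->
  u \in candset adj B g t -> u \in Vgt adj B 1 -> u \in S ->
  (forall w, adj u w -> w \notin S) -> good (stepA g t bv S).
Proof.
move=> hs hI uC u1 uS hw.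
have [uB nB] := V1P u1.
move: uC; rewrite inE => /andP[ut /andP[_ cu]].
have cu' := cu; move: cu' => /and3P[_ su /forallP nb].
apply/properP; split; first by apply: (subset_trans hI); apply: step_Iset.
exists u; last first.
  apply/negP => uI0; move: (subsetP hI u uI0); rewrite inE => /and3P[_ su' _].
  by rewrite su' in su.
have e : stepA g t bv S u = (u \in S, xv g u).
  by rewrite /step ut /= (negbTE uB) /refreshG (hs u uB) eqxx /= cu.
rewrite inE u1 /= {1}/sv e uS /=; apply/forallP => w; apply/implyP => aw.
have sw : ~~ sv g w := implyP (nb w) aw.
rewrite /sv /step; case: ifP => wt /=; first exact: sw.
rewrite (negbTE (nB w aw)) /refreshG (hs w (nB w aw)) eqxx /=.
case: ifP => _ /=; first exact: hw w aw.
by case: ifP => _ //=.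
Qed.

Lemma prob_E g (C : {set V}) u : stab g -> u \in C -> u \in Vgt adj B 1 ->
  pp <= \sum_(S : {set V} | S \subset C) weight adj R g C S *
          ((u \in S) && [forall w, adj u w ==> (w \notin S)])%:R.
Proof.
move=> hs uC u1; have [uB nB] := V1P u1.
set q := qprob adj R g.
pose ea x : R := if adj u x then 0 else 1.
pose eb x : R := if x == u then 0 else 1.
have E1 : forall S : {set V}, S \subset C ->
   weight adj R g C S * ((u \in S) && [forall w, adj u w ==> (w \notin S)])%:R =
   \prod_(x in C) (if x \in S then q x * ea x else (1 - q x) * eb x).
  move=> S SC.
  have -> : \prod_(x in C) (if x \in S then q x * ea x else (1 - q x) * eb x) =
     weight adj R g C S * \prod_(x in C) (if x \in S then ea x else eb x).
    by rewrite /weight -big_split; apply: eq_bigr => x _; case: (x \in S).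
  congr (_ * _).
  case ES: ((u \in S) && _).
    move/andP: ES => [uS /forallP hw].
    rewrite big1 // => x xC; rewrite /ea /eb; case xS: (x \in S).
      case ax: (adj u x) => //; by have := hw x; rewrite ax xS.
    by case: eqP => // ex; rewrite ex uS in xS.
  apply/eqP; rewrite eq_sym; apply/prodf_eq0.
  move/negbT: ES; rewrite negb_and => /orP[uS|].
    exists u => //; by rewrite (negbTE uS) /eb eqxx.
  move/forallPn => [w]; rewrite negb_imply negbK => /andP[aw wS].
  exists w; first by apply: (subsetP SC).
  by rewrite wS /ea aw.
rewrite (eq_bigr _ E1) sumsub (bigD1 u) //=.
have -> : q u * ea u + (1 - q u) * eb u = q u by rewrite /ea /eb irr eqxx mulr1 mulr0 addr0.
set d := deg adj u.
set c : R := expR (- (d%:R)^-1).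
have c0 : 0 <= c := expR_ge0 _.
have c1 : c <= 1 by rewrite /c expR_le1 oppr_le0 invr_ge0 ler0n.
have hprod : expR (-1) <= \prod_(x in C | x != u) (q x * ea x + (1 - q x) * eb x).
  apply: (@le_trans _ _ (\prod_(x in C | x != u) (if adj u x then c else 1))).
    apply: (@le_trans _ _ (\prod_x (if adj u x then c else 1))).
      rewrite (eq_bigr (fun x => if x \in nbrs adj u then c else 1)); last by move=> x _; rewrite inE.
      rewrite -big_mkcond prodr_const -/(deg adj u) -/d.
      case: (posnP d) => [->|dpos]; first by rewrite expr0 expR_le1 oppr_le0 ler01.
      by rewrite -expRM_natr mulNr mulVf ?pnatr_eq0 -?lt0n.
    rewrite [X in _ <= X]big_mkcond /=; apply: ler_prod => x _.
    by case: ((x \in C) && (x != u)); case: (adj u x); rewrite ?c0 ?c1 ?lexx ?ler01.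
  apply: ler_prod => x /andP[xC xu]; case ax: (adj u x).
    rewrite c0 /= /ea /eb ax (negbTE xu) mulr0 add0r mulr1.
    have dpos : (0 < d)%N by apply/card_gt0P; exists x; rewrite inE.
    have qx : q x <= ((1 + d)%N%:R)^-1.
      rewrite /q /qprob lef_pV2 ?posrE ?ltr0n ?addn_gt0 // ler_nat leq_add2l.
      rewrite -[X in (X <= _)%N](hs u uB).
      apply: (leq_bigmax_cond (P := fun y => y \in cnbrs adj x) (F := fun y => xv g y)).
      by apply/setU1P; right; rewrite inE sym.
    apply: (le_trans _ (lerB (lexx 1) qx)).
    have dR : (d%:R : R) != 0 by rewrite pnatr_eq0 -lt0n.
    have -> : 1 - ((1 + d)%N%:R)^-1 = (1 + (d%:R)^-1)^-1 :> R.
      by rewrite natrD; field; rewrite dR natr1 pnatr_eq0.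
    rewrite /c expRN lef_pV2 ?posrE ?expR_gt0 ?expR_ge1Dx //.
    by rewrite ltr_wpDr ?invr_ge0 ?ler0n.
  by rewrite /ea /eb ax (negbTE xu) !mulr1 addrC subrK ler01 lexx.
rewrite /pp; apply: ler_pM; rewrite ?invr_ge0 ?expR_ge0 ?addr_ge0 //; last by rewrite -expRN.
rewrite /q /qprob lef_pV2 ?posrE ?ltr0n ?addn_gt0 ?ltr_wpDl //.
rewrite (_ : (maxdeg adj)%:R + 1 = (1 + maxdeg adj)%N%:R :> R); last by rewrite natrD addrC.
rewrite ler_nat leq_add2l; apply/bigmax_leqP => y yn.
have yB : y \notin B by case/setU1P: yn => [->//|]; rewrite inE; apply: nB.
by rewrite (hs y yB); apply: leq_bigmax.
Qed.


Definition Inv (g : config V) (r : nat) (done : {set V}) : Prop :=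
  match r with
  | 0 => forall u, u \in cnbrs adj v -> u \in done -> ~~ sv g u
  | 1 => (forall u, u \in cnbrs adj v -> ~~ sv g u) /\ v \notin done
  | _ => False
  end.

Lemma claimB : forall n h g r done, stab g -> I0 \subset Iset adj B g ->
  Inv g r done -> reachR bad n h g r done <= 1 - pp.
Proof.
elim=> [|n IH] h g r done hs hI hinv.
  have r2 : (2 <= r)%N = false by case: r hinv => [|[|r]].
  have [hg|hg] := boolP (good g); first by rewrite claimC // subr_ge0 pp_le1.
  by rewrite reach0E r2 (negbTE (not_term hs hI hg)) subr_ge0 pp_le1.
have r2 : (2 <= r)%N = false by case: r hinv => [|[|r]].
have [hg|hg] := boolP (good g); first by rewrite claimC // subr_ge0 pp_le1.
rewrite reachE r2 (negbTE (not_term hs hI hg)); cbv zeta.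
set t := sched st h g; set C := candset adj B g t.
have ht : t \subset activ adj B g by case: (adm h g).
have [vB _] := V1P (V2V1' hv2).
case: (boolP [exists u, (u \in C) && (u \in Vgt adj B 1)]) => [/existsP [u /andP[uC u1]] | noV1].
  apply: (@le_trans _ _ (\sum_(S : {set V} | S \subset C) weight adj R g C S *
      (1 - ((u \in S) && [forall w, adj u w ==> (w \notin S)])%:R))).
    apply: ler_sum => S SC; apply: ler_wpM2l; first exact: weight_ge0.
    case ES: (_ && _) => /=.
      move/andP: ES => [uS /forallP hw].
      have gg : good (stepA g t (byzv st h g) S).
        apply: (@success_good g t (byzv st h g) S u hs hI uC u1 uS) => w aw; have := hw w; by rewrite aw.
      by rewrite subrr; case: ifP => _; rewrite claimC //; apply: step_stab.
    by rewrite subr0; case: ifP => _; apply: rle1.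
  under eq_bigr => S _ do rewrite mulrBr mulr1.
  rewrite sumrB weight_sum1 lerD2l lerN2.
  apply: prob_E => //; by move: uC; rewrite inE => /andP[].
have noV1' : forall u, u \in C -> u \notin Vgt adj B 1.
  by move=> u uC; apply/negP => u1; move/existsPn: noV1 => /(_ u); rewrite uC u1.
have vt_false : v \in t -> (forall u, u \in cnbrs adj v -> ~~ sv g u) -> False.
  move=> vt ab; have := noV1' v; rewrite /C inE vt vB v_cand // (V2V1' hv2).
  by move=> /(_ isT).
apply: sum_w_le => S SC.
set g' := stepA g t (byzv st h g) S.
have hs' : stab g' by apply: step_stab.
have hI' : I0 \subset Iset adj B g' by apply: (subset_trans hI); apply: step_Iset.
have [gg|ng] := boolP (good g'); first by case: ifP => _; rewrite claimC // subr_ge0 pp_le1.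
have F1 : forall u, u \in cnbrs adj v -> sv g' u -> sv g u && (u \notin t).
  move=> u un; have [uB _] := V1P (nbV1 un).
  rewrite /g' /sv /step; case: ifP => ut /=; first by move=> ->.
  rewrite (negbTE uB) /refreshG (hs u uB) eqxx /=.
  have cf : candG adj g u = false.
    apply/negP => cu; have := noV1' u; rewrite /C inE (negbFE ut) uB cu nbV1 //.
    by move=> /(_ isT).
  rewrite cf; case: ifP => wu //= _.
  have := subsetP ht u (negbFE ut); rewrite inE /activable (negbTE uB).
  by rewrite /refreshG (hs u uB) eqxx cf wu.
have allbot : (forall u, u \in cnbrs adj v -> ~~ sv g u) ->
    forall u, u \in cnbrs adj v -> ~~ sv g' u.
  move=> ab u un; apply/negP => su'; have /andP[su _] := F1 u un su'.
  by have := ab u un; rewrite su.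
have vact : (forall u, u \in cnbrs adj v -> ~~ sv g' u) -> v \notin nonactiv adj B g'.
  by move=> ab; rewrite inE negbK /activable (v_cand hs' ab) /= !orbT.
case: ifP => hdone; apply: IH => //.
  case: r hinv {r2} => [|[|r]] // hinv.
    have ab : forall u, u \in cnbrs adj v -> ~~ sv g' u.
      move=> u un; apply/negP => su'; have /andP[su ut] := F1 u un su'.
      have : u \in done :|: t :|: nonactiv adj B g' by rewrite (eqP hdone) inE.
      rewrite !inE (negbTE ut) orbF; case/orP => [ud|na].
        by have := hinv u un ud; rewrite su.
      by have := NA hs' hI' ng un na; rewrite su'.
    by split => //; apply: vact.
  case: hinv => ab vd.
  have : v \in done :|: t :|: nonactiv adj B g' by rewrite (eqP hdone) inE.
  rewrite !inE (negbTE vd) /=; case/orP => [vt|na]; first exact: vt_false vt ab.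
  by have := vact (allbot ab); rewrite inE na.
case: r hinv {r2} => [|[|r]] // hinv.
  move=> u un; rewrite !inE => /orP[/orP[ud|ut]|na].
      apply/negP => su'; have /andP[su _] := F1 u un su'.
      by have := hinv u un ud; rewrite su.
    apply/negP => su'; have /andP[_ nt] := F1 u un su'.
    by rewrite ut in nt.
  exact: NA hs' hI' ng un na.
case: hinv => ab vd; split; first exact: allbot.
rewrite !inE negb_or negb_or vd /=; apply/andP; split.
  by apply/negP => vt; exact: vt_false vt ab.
by have := vact (allbot ab); rewrite inE.
Qed.

End Claims.

Unset Implicit Arguments.

Theorem mainTheorem10 (R : realType) (V : finType) (adj : rel V)
    (B : {set V}) (g0 : config V) (st : strategy V) :
  symmetric adj -> irreflexive adj ->
  admissible adj B st ->
  degree_stabilized adj B g0 ->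
  ~ maximal_indep_in adj (Vgt adj B 2 :|: Iset adj B g0) (Iset adj B g0) ->
  (* the adversary is fair: almost surely the two rounds terminate *)
  (forall eps : R, 0 < eps -> exists n : nat,
      1 - eps <= reach0 adj B R st (fun _ => true) n g0) ->
  forall eps : R, 0 < eps -> exists n : nat,
    ((maxdeg adj)%:R + 1)^-1 * (expR 1)^-1 - eps <=
    reach0 adj B R st (fun g => Iset adj B g0 \proper Iset adj B g) n g0.
Proof.
move=> sym irr adm hs0 nmax hfair eps eps0.
set I0 := Iset adj B g0.
set W := Vgt adj B 2 :|: I0.
have indI : indep_in adj W I0.
  split; first exact: subsetUr.
  move=> u w; rewrite !inE => /and3P[_ su /forallP nu] /and3P[_ sw _].
  apply/negP => auw; have := nu w; by rewrite auw sw.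
have [S' [pS [SW Sind]]] : exists S' : {set V}, I0 \proper S' /\ indep_in adj W S'.
  apply: NNPP => hn; apply: nmax; split => // S' hp hi; apply: hn; exists S'; by split.
case/properP: (pS) => I0S [v vS vI].
have hv2 : v \in Vgt adj B 2.
  by have := subsetP SW v vS; rewrite in_setU (negbTE vI) orbF.
have hvI : forall u, u \in cnbrs adj v -> u \notin I0.
  move=> u /setU1P [->//|]; rewrite inE => avu; apply/negP => uI.
  by have := Sind v u vS (subsetP I0S u uI); rewrite avu.
have hinv0 : Inv adj v g0 0 (nonactiv adj B g0).
  move=> u un; rewrite inE => na; apply: (NA hv2 hvI hs0 (subxx _) _ un na).
  by rewrite /good properxx.
have [n hn] := hfair eps eps0; exists n.
have hb := @claimB R V adj B st sym irr adm I0 v hv2 hvI n [::] g0 0 (nonactiv adj B g0) hs0 (subxx _) hinv0.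
have lin := @reach_lin R V adj B st (fun g => I0 \proper Iset adj B g) (bad adj B I0) (fun _ => true)
   (fun g => ltac:(by rewrite /bad /good; case: (_ \proper _); rewrite ?addr0 ?add0r)) n [::] g0 0 (nonactiv adj B g0).
move: hn hb; rewrite /reach0 lin /pp => hn hb.
lra.
Qed.
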